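(* Let $N=(G=(V,E),\sigma,u,s)$ be a skew-symmetric network and $f$ an IS-flow in $N$. Then $f$ has maximum value among IS-flows in $N$ if and only if the split-graph $S(G^+,u_f)$ contains no regular path from $s$ to $s'$.
   Context: A skew-symmetric graph is a finite directed graph $G=(V,E)$ (parallel arcs allowed) with a map $\sigma$ of $V\cup E$ onto itself such that $\sigma(x)\ne x$, $\sigma(\sigma(x))=x$ for all $x$, $\sigma(V)=V$, and for each arc $a$ from $v$ to $w$, $\sigma(a)$ is an arc from $\sigma(w)$ to $\sigma(v)$. A function $h$ on $E$ is symmetric if $h(a)=h(\sigma(a))$. A skew-symmetric network is $N=(G,\sigma,u,s)$ with $u:E\to\mathbb Z_{\ge0}$ symmetric and source $s$; $s'=\sigma(s)$ is the sink. A flow is $f:E\to\mathbb R_{\ge0}$ with $f\le u$ and flow conservation at every node other than $s,s'$; value $|f|$ is the net outflow at $s$. An IS-flow is an integer-valued symmetric flow. $G^+=(V,E^+)$ is obtained from $G$ by adding for each arc $a=(x,y)$ a reverse arc $a^R=(y,x)$, with $\sigma(a^R)=(\sigma(a))^R$; residual capacities: $u_f(a)=u(a)-f(a)$ for $a\in E$, $u_f(a^R)=f(a)$. For a skew-symmetric graph $H$ with nonnegative integer symmetric capacity $h$, the split-graph $S(H,h)$ is obtained by replacing each arc $a=(x,y)$ by two parallel arcs $a_1,a_2$ from $x$ to $y$ with capacities $\lceil h(a)/2\rceil$ and $\lfloor h(a)/2\rfloor$ respectively and deleting arcs of zero capacity; its symmetry is $\sigma(a_i)=(\sigma(a))_i$.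 A regular path is a directed path containing no pair of mutually symmetric arcs ($a$ and $\sigma(a)$). *)

(* Defs.v *)
From mathcomp Require Import all_boot all_order all_algebra.
Set Implicit Arguments. Unset Strict Implicit. Unset Printing Implicit Defensive.
Import GRing.Theory Num.Theory.

(* A directed multigraph: finite node type V, finite arc type A,
   arc a goes from [tl a] to [hd a] (parallel arcs allowed). *)

Definition skew_symmetric (V A : finType) (tl hd : A -> V)
    (sV : V -> V) (sA : A -> A) : Prop :=
  [/\ (forall v, sV v != v), (forall v, sV (sV v) = v),
      (forall a, sA a != a), (forall a, sA (sA a) = a)
    & forall a, tl (sA a) = sV (hd a) /\ hd (sA a) = sV (tl a)].

Definition symmetric_fun (A : Type) (sA : A -> A) (h : A -> nat) : Prop :=
  forall a, h (sA a) = h a.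

(** IS-flow: integer (hence nat, since flows are nonnegative) valued,
    capacity respecting, conservative off {s, s'}, and symmetric. *)
Definition is_ISflow (V E : finType) (tl hd : E -> V) (sV : V -> V)
    (sE : E -> E) (u : E -> nat) (s : V) (f : E -> nat) : Prop :=
  [/\ (forall a, f a <= u a),
      (forall v, v != s -> v != sV s ->
         \sum_(a | hd a == v) f a = \sum_(a | tl a == v) f a)
    & symmetric_fun sE f].

Definition flow_value (V E : finType) (tl hd : E -> V) (s : V)
    (f : E -> nat) : int :=
  (\sum_(a | tl a == s) f a)%:Z - (\sum_(a | hd a == s) f a)%:Z.

(** The graph G^+: arcs [inl a] (= a) and [inr a] (= a^R). *)
Definition plus_tl (V E : Type) (tl hd : E -> V) (x : E + E) : V :=
  match x with inl a => tl a | inr a => hd a end.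
Definition plus_hd (V E : Type) (tl hd : E -> V) (x : E + E) : V :=
  match x with inl a => hd a | inr a => tl a end.
Definition plus_sigma (E : Type) (sE : E -> E) (x : E + E) : E + E :=
  match x with inl a => inl (sE a) | inr a => inr (sE a) end.
Definition residual (E : Type) (u f : E -> nat) (x : E + E) : nat :=
  match x with inl a => u a - f a | inr a => f a end.

(** Split-graph S(H,h): each arc a of H becomes (a,true) = a_1 with capacity
    ceil(h a / 2) and (a,false) = a_2 with capacity floor(h a / 2); arcs of
    zero capacity are deleted, i.e. the arcs of S(H,h) are the pairs x with
    [split_arc h x]. *)
Definition split_cap (A : Type) (h : A -> nat) (x : A * bool) : nat :=
  if x.2 then uphalf (h x.1) else (h x.1)./2.
Definition split_arc (A : Type) (h : A -> nat) (x : A * bool) : bool :=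
  0 < split_cap h x.
Definition split_tl (V A : Type) (tl : A -> V) (x : A * bool) : V := tl x.1.
Definition split_hd (V A : Type) (hd : A -> V) (x : A * bool) : V := hd x.1.
Definition split_sigma (A : Type) (sA : A -> A) (x : A * bool) : A * bool :=
  (sA x.1, x.2).

Fixpoint is_walk (V A : eqType) (tl hd : A -> V) (x y : V) (p : seq A)
    : bool :=
  match p with
  | [::] => x == y
  | a :: q => (tl a == x) && is_walk tl hd (hd a) y q
  end.

Definition regular (A : eqType) (sA : A -> A) (p : seq A) : bool :=
  all (fun a => sA a \notin p) p.

Definition split_regular_path (V A : eqType) (tl hd : A -> V) (sA : A -> A)
    (h : A -> nat) (x y : V) (p : seq (A * bool)) : bool :=
  [&& all (split_arc h) p,
      is_walk (split_tl tl) (split_hd hd) x y p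
    & regular (split_sigma sA) p].

(* Main.v *)
Require Import Defs.
From mathcomp Require Import all_boot all_order all_algebra zify ring.
Set Implicit Arguments. Unset Strict Implicit.
Import GRing.Theory Num.Theory.

Lemma uniq_map_inj (T1 T2 : eqType) (f : T1 -> T2) (s : seq T1) x y :
  uniq (map f s) -> x \in s -> y \in s -> f x = f y -> x = y.
Proof.
elim: s => //= z s IH /andP[nz us]; rewrite !inE.
case/orP=> [/eqP->|xs]; case/orP=> [/eqP->|ys] //.
- move=> E; case/negP: nz; rewrite E; exact: map_f.
- move=> E; case/negP: nz; rewrite -E; exact: map_f.
- exact: IH.
Qed.

Section Walk.
Variables (V A : eqType) (tl hd : A -> V).

Lemma is_walk_cat x z y p q : is_walk tl hd x z p -> is_walk tl hd z y q ->
  is_walk tl hd x y (p ++ q).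
Proof.
elim: p x => [|a p IH] x /=; first by move/eqP->.
by case/andP=> -> /IH H /H ->.
Qed.

Lemma walk_suffix z y q w : is_walk tl hd z y q -> w \in map tl q ->
  exists q2, [/\ is_walk tl hd w y q2, {subset q2 <= q} &
                 (uniq (map tl q) -> uniq (map tl q2))].
Proof.
elim: q z => [|e r IH] z //= /andP[/eqP ez wr]; rewrite inE.
case: (eqVneq w (tl e)) => [->|nw] /=.
  move=> _; exists (e :: r); split => //=; by rewrite eqxx.
move=> /(IH _ wr) [q2 [w2 s2 u2]]; exists q2; split => //.
  by move=> t /s2; rewrite inE => ->; rewrite orbT.
by case/andP=> _ /u2.
Qed.

Lemma shortcut x y p : is_walk tl hd x y p ->
  exists q, [/\ is_walk tl hd x y q, {subset q <= p} & uniq (map tl q)].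
Proof.
elim: p x => [|e p IH] x /=.
  by move=> H; exists [::]; split.
case/andP=> /eqP ex /IH [q' [w' s' u']].
case xq: (x \in map tl q').
  have [q2 [w2 s2 u2]] := walk_suffix w' xq.
  exists q2; split => //; last by apply: u2.
  by move=> t /s2 /s'; rewrite inE => ->; rewrite orbT.
exists (e :: q'); split => /=.
- by rewrite ex eqxx.
- by move=> t; rewrite !inE => /orP[->|/s' ->] //; rewrite orbT.
- by rewrite ex xq.
Qed.

Lemma is_walk_map (B : eqType) (g : B -> A) x y (p : seq B) :
  is_walk tl hd x y (map g p) = is_walk (tl \o g) (hd \o g) x y p.
Proof. by elim: p x => //= b p IH x; rewrite IH. Qed.

End Walk.

Lemma sumZ (I : finType) (P : pred I) (F : I -> nat) :
  Posz (\sum_(i | P i) F i)%N = (\sum_(i | P i) Posz (F i))%R.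
Proof. by apply: (big_morph Posz) => //= m n; rewrite PoszD. Qed.

Lemma walk_count (V : eqType) (A : finType) (tl hd : A -> V) x y p v :
  is_walk tl hd x y p ->
  (Posz (\sum_(a | hd a == v) count_mem a p) - Posz (\sum_(a | tl a == v) count_mem a p)
   = Posz (v == y) - Posz (v == x))%R.
Proof.
elim: p x => [|b p IH] x /=.
  by move/eqP->; rewrite !big1 // subrr subrr.
case/andP=> /eqP bx /IH H.
have E (f : A -> V) : (\sum_(a | f a == v) count_mem a (b :: p) =
          (f b == v) + \sum_(a | f a == v) count_mem a p)%N.
  rewrite /= big_split /=; congr (_ + _)%N.
  rewrite big_mkcond (bigD1 b) //= big1 ?addn0.
    by rewrite eqxx; case: (f b == v).
  move=> i ib; rewrite (eq_sym b) (negbTE ib); by case: ifP.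
rewrite !E PoszD [X in (_ - X)%R]PoszD bx.
have : (Posz (\sum_(a | hd a == v) count_mem a p) - Posz (\sum_(a | tl a == v) count_mem a p))%R = (Posz (v == y) - Posz (v == hd b))%R by exact: H.
rewrite ![(_ == v)]eq_sym.
move=> H2. lia.
Qed.

Definition deg (A : finType) (V : eqType) (D : {set A}) (f : A -> V) v :=
  (\sum_(a : A) ((a \in D) && (f a == v) : nat))%N.

Lemma deg_change (A : finType) (V : eqType) (D D' : {set A}) (f f' : A -> V) v
  (S : seq A) : uniq S ->
  (forall a, a \notin S -> ((a \in D) && (f a == v)) = ((a \in D') && (f' a == v))) ->
  deg D f v + \sum_(a <- S) ((a \in D') && (f' a == v) : nat) =
  deg D' f' v + \sum_(a <- S) ((a \in D) && (f a == v) : nat).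
Proof.
move=> uS H; rewrite /deg (bigID (mem S)) [X in _ = X + _](bigID (mem S)) /=.
rewrite !(big_uniq _ uS) /=.
rewrite [X in _ = _ + X + _](eq_bigr (fun a => ((a \in D) && (f a == v) : nat))); last first.
  by move=> i /H ->.
lia.
Qed.

Lemma deg_pos (A : finType) (V : eqType) (D : {set A}) (f : A -> V) v :
  0 < deg D f v -> exists2 a, a \in D & f a = v.
Proof.
move=> H; case: (pickP (fun a => (a \in D) && (f a == v))) => [a /andP[? /eqP]|N].
  by exists a.
by move: H; rewrite /deg big1 // => a _; rewrite N.
Qed.

Lemma deg_ge1 (A : finType) (V : eqType) (D : {set A}) (f : A -> V) a :
  a \in D -> 0 < deg D f (f a).
Proof.
move=> aD; rewrite /deg (bigD1 a) //= aD eqxx; lia.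
Qed.

Lemma card_aux m k (c : bool) : 1 + (c + m) <= k.+1 -> m <= k.
Proof. case: c => /=; lia. Qed.

Lemma ar1 (X Y p q r : nat) : X + r = Y + (p + (q + r)) -> Y + (p + q) = X.
Proof. lia. Qed.

Lemma ar2 (X Y p q r : nat) : X + q = Y + (p + (q + r)) -> Y + (p + r) = X.
Proof. lia. Qed.

Lemma ar3 (X Y Z W p q : nat) : Y + (p + q) = X -> Z + (q + p) = W -> X = W -> Y = Z.
Proof. lia. Qed.
Lemma ar4 (X Y Z W p q : nat) : Y + (p + q) = X -> Z + (q + p) = W -> W < X -> Z < Y.
Proof. lia. Qed.

Lemma walk_flatten (V A : eqType) (tl hd tl' hd' : A -> V) (ex : A -> seq A) :
  (forall e, is_walk tl hd (tl' e) (hd' e) (ex e)) ->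
  forall p z w, is_walk tl' hd' z w p -> is_walk tl hd z w (flatten (map ex p)).
Proof.
move=> H; elim=> [|e p IH] z w /=; first by [].
case/andP=> /eqP <- /IH; apply: is_walk_cat; exact: H.
Qed.

Section L1.
Variables (V : eqType) (A : finType) (sV : V -> V) (sA : A -> A) (s : V).
Hypotheses (nfV : forall v, sV v != v) (ivV : forall v, sV (sV v) = v)
  (nfA : forall a, sA a != a) (ivA : forall a, sA (sA a) = a).

Lemma sA_inj : injective sA.
Proof. by move=> x y E; rewrite -(ivA x) E ivA. Qed.

Lemma sV_eq x y : (sV x == y) = (x == sV y).
Proof. by apply/eqP/eqP => [<-|->]; rewrite ivV. Qed.

Lemma sA_eq x y : (sA x == y) = (x == sA y).
Proof. by apply/eqP/eqP => [<-|->]; rewrite ivA. Qed.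

Lemma L1 n : forall (D : {set A}) (tl hd : A -> V), #|D| <= n ->
  (forall a, tl (sA a) = sV (hd a)) -> (forall a, hd (sA a) = sV (tl a)) ->
  (forall a, a \in D -> sA a \in D) ->
  (forall v, v != s -> v != sV s -> deg D tl v = deg D hd v) ->
  deg D hd s < deg D tl s ->
  exists p, [&& all (mem D) p, is_walk tl hd s (sV s) p & regular sA p].
Proof.
elim: n => [|n IH] D tl hd cD tlS hdS DS bal exc.
  have [a aD _] := deg_pos (leq_ltn_trans (leq0n _) exc).
  by move: cD; rewrite (cardsD1 a) aD.
have [a aD tla] := deg_pos (leq_ltn_trans (leq0n _) exc).
have saD := DS _ aD.
have naa : (sA a == a) = false by apply/negbTE.
have naa' : (a == sA a) = false by rewrite eq_sym.
set x := hd a.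
case: (eqVneq x (sV s)) => [xs'|xs'].
  exists [:: a] => /=; rewrite aD tla -/x xs' !eqxx /= /regular /= inE.
  by rewrite naa.
case: (eqVneq x s) => [xs|xs].
  set D' := D :\ a :\ sA a.
  have D'E e : (e \in D') = [&& e != sA a, e != a & e \in D].
    by rewrite !in_setD1.
  have cD' : #|D'| <= n.
    move: cD; rewrite (cardsD1 a D) aD (cardsD1 (sA a) (D :\ a)).
    rewrite -/D'; exact: card_aux.
  have DS' e : e \in D' -> sA e \in D'.
    rewrite !D'E => /and3P[e1 e2 eD]; rewrite DS // andbT.
    by rewrite sA_eq ivA e2 sA_eq e1.
  have uS : uniq [:: a; sA a] by rewrite /= inE naa'.
  have dc (f : A -> V) v : deg D f v + 0 =
      deg D' f v + (((f a == v) : nat) + ((f (sA a) == v) : nat)).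
    have := deg_change (v := v) (D := D) (D' := D') (f' := f) (f := f) uS.
    rewrite !big_cons !big_nil !D'E !eqxx naa naa' /= aD saD /= ?andbF ?addn0.
    move=> -> // e; rewrite !inE negb_or => /andP[e1 e2].
    by rewrite e1 e2.
  have [p /and3P[pD pw pr]] : exists p, [&& all (mem D') p,
        is_walk tl hd s (sV s) p & regular sA p].
    apply: IH => //.
      move=> v v1 v2; have := dc tl v; have := dc hd v.
      rewrite tlS hdS tla -/x xs (bal v v1 v2) -!(eq_sym v).
      rewrite (negbTE v1) (negbTE v2); lia.
    have := dc tl s; have := dc hd s.
    rewrite tlS hdS tla -/x xs eqxx -(eq_sym s); case: (s == sV s) => /=; lia.
  exists p; rewrite pw pr !andbT; apply/allP => e /(allP pD).
  by rewrite /= D'E => /and3P[].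
have [b bD tlb] : exists2 b, b \in D & tl b = x.
  apply: deg_pos; rewrite bal //; exact: deg_ge1.
set y := hd b.
have sbD := DS _ bD.
have nab : (a == b) = false.
  by apply/negbTE; apply: contra xs => /eqP E; rewrite -tlb -E tla.
have nsab : (sA a == b) = false.
  apply/negbTE; apply/eqP => E; move: (tlb); rewrite -E tlS -/x => /eqP.
  by rewrite (negbTE (nfV _)).
have nasb : (a == sA b) = false by rewrite eq_sym sA_eq eq_sym.
have nsasb : (sA a == sA b) = false by rewrite sA_eq ivA.
have nbb : (sA b == b) = false by apply/negbTE.
have nba : (b == a) = false by rewrite eq_sym.
have nbsa : (b == sA a) = false by rewrite eq_sym.
have nsba : (sA b == a) = false by rewrite eq_sym.
have nsbsa : (sA b == sA a) = false by rewrite eq_sym.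
have nbb' : (b == sA b) = false by rewrite eq_sym.
set D' := D :\ b :\ sA b.
have D'E e : (e \in D') = [&& e != sA b, e != b & e \in D].
  by rewrite !in_setD1.
have cD' : #|D'| <= n.
  move: cD; rewrite (cardsD1 b D) bD (cardsD1 (sA b) (D :\ b)).
  rewrite -/D'; exact: card_aux.
have DS' e : e \in D' -> sA e \in D'.
  rewrite !D'E => /and3P[e1 e2 eD]; rewrite DS // andbT.
  by rewrite sA_eq ivA e2 sA_eq e1.
pose tl' := fun e => if e == sA a then sV y else tl e.
pose hd' := fun e => if e == a then y else hd e.
have tlS' e : tl' (sA e) = sV (hd' e).
  rewrite /tl' /hd' (inj_eq sA_inj); case: ifP => // _; exact: tlS.
have hdS' e : hd' (sA e) = sV (tl' e).
  rewrite /tl' /hd' sA_eq; case: ifP => _; [by rewrite ivV | exact: hdS].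
have aD' : a \in D' by rewrite D'E nasb nab aD.
have saD' : sA a \in D' by rewrite D'E nsasb nsab saD.
have dtl v : deg D' tl' v + (((sV x == v) : nat) + ((x == v) : nat))
           = deg D tl v.
  have uS : uniq [:: sA a; b; sA b].
    by rewrite /= !inE nsab nsasb nbb'.
  have := deg_change (v := v) (D := D) (D' := D') (f := tl) (f' := tl') uS.
  rewrite !big_cons !big_nil !D'E /tl' !eqxx ?nab ?nba ?nsab ?nbsa ?nasb ?nsba ?nsasb ?nsbsa ?nbb ?nbb' /=.
  rewrite saD bD sbD ?andbF ?andbT /= ?addn0 tlS -/x tlb tlS -/y.
  move=> H; apply: ar1 (H _) => e; rewrite !inE !negb_or => /and3P[e1 e2 e3].
  by rewrite e2 e3 (negbTE e1).
have dhd v : deg D' hd' v + (((x == v) : nat) + ((sV x == v) : nat))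
           = deg D hd v.
  have uS : uniq [:: a; b; sA b].
    by rewrite /= !inE nab nasb nbb'.
  have := deg_change (v := v) (D := D) (D' := D') (f := hd) (f' := hd') uS.
  rewrite !big_cons !big_nil !D'E /hd' !eqxx ?nab ?nba ?nsab ?nbsa ?nasb ?nsba ?nsasb ?nsbsa ?nbb ?nbb' /=.
  rewrite aD bD sbD ?andbF ?andbT /= ?addn0 -/x -/y hdS tlb.
  move=> H; apply: ar2 (H _) => e; rewrite !inE !negb_or => /and3P[e1 e2 e3].
  by rewrite e2 e3 (negbTE e1).
have [p' /and3P[pD pw pr]] : exists p, [&& all (mem D') p,
      is_walk tl' hd' s (sV s) p & regular sA p].
  apply: IH => //.
    by move=> v v1 v2; apply: ar3 (dtl v) (dhd v) (bal v v1 v2).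
  exact: ar4 (dtl s) (dhd s) exc.
pose ex e := if e == a then [:: a; b] else if e == sA a then [:: sA b; sA a] else [:: e].
have exw e : is_walk tl hd (tl' e) (hd' e) (ex e).
  rewrite /ex /tl' /hd'; case: (eqVneq e a) => [->|ea].
    by rewrite naa' /= !eqxx -/x tlb !eqxx.
  case: (eqVneq e (sA a)) => [->|esa] /=.
    by rewrite tlS -/y hdS tlb tlS -/x !eqxx.
  by rewrite !eqxx.
have pw2 := walk_flatten exw pw.
have bp' : b \notin p'.
  by apply/negP => /(allP pD); rewrite /= D'E eqxx andbF.
have sbp' : sA b \notin p'.
  by apply/negP => /(allP pD); rewrite /= D'E eqxx.
have pr' e : e \in p' -> sA e \notin p' by move=> ep; apply: (allP pr).
have memf t : t \in flatten (map ex p') ->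
   [\/ t \in p', (t = b /\ a \in p') | (t = sA b /\ sA a \in p')].
  case/flattenP => l /mapP[e ep ->]; rewrite /ex.
  case: (eqVneq e a) => [ea|_].
    by rewrite !inE => /orP[/eqP->|/eqP->]; [apply: Or31; rewrite -ea| apply: Or32; rewrite -ea].
  case: (eqVneq e (sA a)) => [ea|_].
    by rewrite !inE => /orP[/eqP->|/eqP->]; [apply: Or33; rewrite -ea| apply: Or31; rewrite -ea].
  by rewrite inE => /eqP->; apply: Or31.
exists (flatten (map ex p')); rewrite pw2 /=; apply/andP; split.
  apply/allP => t /memf [tp|[-> _]|[-> _]] //=.
  by have := allP pD t tp; rewrite /= D'E => /and3P[].
apply/allP => t /memf Ht; apply/negP => /memf Hs.
case: Ht => [tp|[Et ap]|[Et ap]]; case: Hs => [sp|[E ap2]|[E ap2]].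
- by move: (pr' _ tp); rewrite sp.
- by move: tp; rewrite -(ivA t) E (negbTE sbp').
- by move: tp; rewrite -(ivA t) E ivA (negbTE bp').
- by move: sbp'; rewrite -Et sp.
- by move: nbb; rewrite (_ : sA b = b) ?eqxx // -{1}Et.
- by move: (pr' _ ap); rewrite ap2.
- by move: bp'; rewrite Et ivA in sp; rewrite sp.
- by move: (pr' _ ap2); rewrite ap.
- by move: nbb'; rewrite Et ivA in E; rewrite -{1}E eqxx.
Qed.
End L1.

Lemma sum_lt n m : m <= n -> (\sum_(i < n) (i < m : nat))%N = m.
Proof.
move=> mn; rewrite -(big_mkord xpredT (fun i => (i < m : nat))).
rewrite (big_cat_nat (leq0n m) mn) /=.
rewrite (eq_big_nat _ _ (F2 := fun _ => 1%N)); last by move=> i /andP[_ ->].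
rewrite sum_nat_const_nat muln1 subn0 big_nat_cond big1 ?addn0 //.
by move=> i /andP[/andP[mi _] _]; rewrite ltnNge mi.
Qed.

Lemma half_pos k : 1 < k -> 0 < k./2.
Proof. by case: k => [|[|k]]. Qed.

Section L2.
Variables (V : eqType) (A : finType) (tl hd : A -> V) (sV : V -> V) (sA : A -> A) (s : V)
  (phi : A -> nat).
Hypotheses (nfV : forall v, sV v != v) (ivV : forall v, sV (sV v) = v)
  (nfA : forall a, sA a != a) (ivA : forall a, sA (sA a) = a)
  (tlS : forall a, tl (sA a) = sV (hd a)) (hdS : forall a, hd (sA a) = sV (tl a))
  (phiS : forall a, phi (sA a) = phi a)
  (bal : forall v, v != s -> v != sV s ->
     (\sum_(a | tl a == v) phi a = \sum_(a | hd a == v) phi a)%N)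
  (exc : (\sum_(a | hd a == s) phi a < \sum_(a | tl a == s) phi a)%N).

Lemma L2 : exists p, split_regular_path tl hd sA phi s (sV s) p.
Proof.
pose n := (\max_a phi a).+1.
have phin a : phi a <= n by rewrite ltnW // ltnS leq_bigmax.
pose D : {set (A * 'I_n)%type} := [set x : (A * 'I_n)%type | (x.2 : nat) < phi x.1].
pose sA2 (x : (A * 'I_n)%type) := (sA x.1, x.2).
have degE (f : A -> V) v : deg D (fun x => f x.1) v = (\sum_(a | f a == v) phi a)%N.
  transitivity (\sum_(a : A) \sum_(i : 'I_n) ((i < phi a) && (f a == v) : nat))%N.
    rewrite /deg pair_bigA; apply: eq_bigr => -[a i] _ /=; by rewrite /D inE.
  rewrite [RHS]big_mkcond /=; apply: eq_bigr => a _.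
  case: (f a == v) => /=; last by rewrite big1 // => i; rewrite andbF.
  rewrite -[RHS](sum_lt (phin a)); apply: eq_bigr => i _; by rewrite andbT.
have [p /and3P[pD pw pr]] : exists p, [&& all (mem D) p,
    is_walk (fun x => tl x.1) (fun x => hd x.1) s (sV s) p & regular sA2 p].
  apply: (@L1 V _ sV sA2 s nfV ivV _ _ #|D|) => //.
  - by case=> a i; apply/negP => /eqP [] /eqP; rewrite (negbTE (nfA a)).
  - by case=> a i; rewrite /sA2 ivA.
  - by move=> x; rewrite /= tlS.
  - by move=> x; rewrite /= hdS.
  - by move=> x; rewrite /D !inE /= phiS.
  - by move=> v v1 v2; rewrite !degE bal.
  - by rewrite !degE.
have [q [qw qs qu]] := shortcut pw.
have qD : all (mem D) q by apply/allP => x /qs /(allP pD).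
have qr : regular sA2 q by apply/allP => x /qs xp; apply/negP => /qs; apply/negP; exact: (allP pr).
have ui y y' : y \in q -> y' \in q -> y.1 = y'.1 -> y = y'.
  move=> yq y'q E; apply: (uniq_map_inj qu) => //=; by rewrite E.
pose lbl (x : (A * 'I_n)%type) := all (fun y : (A * 'I_n)%type => (y.1 == sA x.1) ==> (x.2 < y.2)) q.
have lblE x y : x \in q -> y \in q -> y.1 = sA x.1 -> lbl x = (x.2 < y.2).
  move=> xq yq E; apply/allP/idP => [H|H y' y'q].
    by have := H y yq; rewrite E eqxx.
  by apply/implyP => /eqP E'; rewrite (ui y' y) // E E'.
have neq2 x y : x \in q -> y \in q -> y.1 = sA x.1 -> x.2 != y.2.
  move=> xq yq E; apply/eqP => E2; have := allP qr x xq; rewrite /sA2 -E E2.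
  by case: (y) yq => ? ? /= ->.
exists (map (fun x => (x.1, lbl x)) q); apply/and3P; split.
- apply/allP => z /mapP [x xq ->]; rewrite /split_arc /split_cap /=.
  have := allP qD x xq; rewrite /= /D inE => xphi.
  case lx: (lbl x); first by rewrite uphalf_gt0; apply: leq_ltn_trans xphi.
  move/negbT: lx => /allPn [y yq]; rewrite negb_imply => /andP[/eqP E ny].
  have := neq2 _ _ xq yq E; rewrite neq_ltn (negbTE ny) /= => yx.
  apply: half_pos; apply: leq_ltn_trans xphi; exact: leq_ltn_trans yx.
- by rewrite is_walk_map.
- apply/allP => z /mapP [x xq ->]; apply/negP => /mapP [y yq [E1 E2]].
  have E1' : x.1 = sA y.1 by rewrite -E1 ivA.
  move: E2; rewrite (lblE _ _ xq yq (esym E1)) (lblE _ _ yq xq E1').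
  have := neq2 _ _ xq yq (esym E1); rewrite neq_ltn.
  by case/orP => H; rewrite H ltnNge ltnW.
Qed.
End L2.

Lemma plus_tl_sum (V : eqType) (E : finType) (tl hd : E -> V) (F : E + E -> nat) v :
  (\sum_(x | plus_tl tl hd x == v) F x =
   \sum_(e | tl e == v) F (inl e) + \sum_(e | hd e == v) F (inr e))%N.
Proof. by rewrite big_sumType. Qed.

Lemma plus_hd_sum (V : eqType) (E : finType) (tl hd : E -> V) (F : E + E -> nat) v :
  (\sum_(x | plus_hd tl hd x == v) F x =
   \sum_(e | hd e == v) F (inl e) + \sum_(e | tl e == v) F (inr e))%N.
Proof. by rewrite big_sumType. Qed.

Definition dphi (E : Type) (f g : E -> nat) (x : E + E) : nat :=
  match x with inl e => g e - f e | inr e => f e - g e end.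

Lemma phi_bal (V : eqType) (E : finType) (tl hd : E -> V) (f g : E -> nat) v :
  (Posz (\sum_(x | plus_tl tl hd x == v) dphi f g x) -
   Posz (\sum_(x | plus_hd tl hd x == v) dphi f g x) =
   (Posz (\sum_(e | tl e == v) g e) - Posz (\sum_(e | hd e == v) g e)) -
   (Posz (\sum_(e | tl e == v) f e) - Posz (\sum_(e | hd e == v) f e)))%R.
Proof.
rewrite plus_tl_sum plus_hd_sum /= !PoszD !sumZ.
have pw e : (Posz (g e - f e) - Posz (f e - g e) = Posz (g e) - Posz (f e))%R by lia.
have Ht : (\sum_(e | tl e == v) Posz (g e - f e) - \sum_(e | tl e == v) Posz (f e - g e)
   = \sum_(e | tl e == v) Posz (g e) - \sum_(e | tl e == v) Posz (f e))%R.
  by rewrite -!sumrB; apply: eq_bigr => e _; exact: pw.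
have Hh : (\sum_(e | hd e == v) Posz (g e - f e) - \sum_(e | hd e == v) Posz (f e - g e)
   = \sum_(e | hd e == v) Posz (g e) - \sum_(e | hd e == v) Posz (f e))%R.
  by rewrite -!sumrB; apply: eq_bigr => e _; exact: pw.
lia.
Qed.

Lemma split_arc_mono (A : Type) (h h' : A -> nat) z :
  (forall x, h x <= h' x) -> split_arc h z -> split_arc h' z.
Proof.
move=> H; rewrite /split_arc /split_cap; case: (z.2) => H1.
  exact: leq_trans H1 (uphalf_leq (H _)).
exact: leq_trans H1 (half_leq (H _)).
Qed.

Lemma hard_dir (V E : finType) (tl hd : E -> V) (sV : V -> V) (sE : E -> E)
    (u : E -> nat) (s : V) (f g : E -> nat) :
  skew_symmetric tl hd sV sE -> symmetric_fun sE u ->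
  is_ISflow tl hd sV sE u s f -> is_ISflow tl hd sV sE u s g ->
  (flow_value tl hd s f < flow_value tl hd s g)%R ->
  exists p : seq ((E + E) * bool),
       split_regular_path (plus_tl tl hd) (plus_hd tl hd) (plus_sigma sE)
         (residual u f) s (sV s) p.
Proof.
move=> [nfV ivV nfE ivE sk] uS [fu fc fS] [gu gc gS] lt.
have [p /and3P[pa pw pr]] : exists p : seq ((E + E) * bool),
       split_regular_path (plus_tl tl hd) (plus_hd tl hd) (plus_sigma sE)
         (dphi f g) s (sV s) p.
  apply: L2 => //.
  - by move=> [e|e] /=; apply/negP => /eqP [] /eqP; rewrite (negbTE (nfE e)).
  - by move=> [e|e] /=; rewrite ivE.
  - by move=> [e|e] /=; have [H1 H2] := sk e; rewrite ?H1 ?H2.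
  - by move=> [e|e] /=; have [H1 H2] := sk e; rewrite ?H1 ?H2.
  - by move=> [e|e] /=; rewrite fS gS.
  - move=> v v1 v2; have := phi_bal tl hd f g v.
    rewrite (fc v v1 v2) (gc v v1 v2) => /eqP; rewrite !subrr ?subr0 subr_eq0 => /eqP -[] -> //.
  - have := phi_bal tl hd f g s; move: lt; rewrite /flow_value => H1 H2.
    by rewrite -ltz_nat -subr_gt0 H2 subr_gt0.
exists p; apply/and3P; split => //.
apply/allP => z /(allP pa); apply: split_arc_mono => -[e|e] /=.
  exact: leq_sub2r.
exact: leq_subr.
Qed.

Lemma cap_pos (A : Type) (h : A -> nat) z : split_arc h z -> 0 < h z.1.
Proof.
rewrite /split_arc /split_cap; case: z.2; first by rewrite uphalf_gt0.
by case: (h z.1).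
Qed.

Lemma cap_two (A : Type) (h : A -> nat) x : split_arc h (x, false) -> 1 < h x.
Proof. by rewrite /split_arc /split_cap /=; case: (h x) => [|[|k]]. Qed.

Lemma easy_dir (V E : finType) (tl hd : E -> V) (sV : V -> V) (sE : E -> E)
    (u : E -> nat) (s : V) (f : E -> nat) :
  skew_symmetric tl hd sV sE -> symmetric_fun sE u ->
  is_ISflow tl hd sV sE u s f ->
  (exists p : seq ((E + E) * bool),
       split_regular_path (plus_tl tl hd) (plus_hd tl hd) (plus_sigma sE)
         (residual u f) s (sV s) p) ->
  exists g, is_ISflow tl hd sV sE u s g /\
     flow_value tl hd s g = (flow_value tl hd s f + 2)%R.
Proof.
move=> [nfV ivV nfE ivE sk] uS [fu fc fS] [p /and3P[pa pw pr]].
have [q [qw qs qu]] := shortcut pw.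
have qa : all (split_arc (residual u f)) q by apply/allP => z /qs /(allP pa).
have qr : regular (split_sigma (plus_sigma sE)) q.
  by apply/allP => z /qs zp; apply/negP => /qs; apply/negP; exact: (allP pr).
pose sP := plus_sigma sE.
have ivP x : sP (sP x) = x by case: x => e /=; rewrite ivE.
have resS x : residual u f (sP x) = residual u f x by case: x => e /=; rewrite ?uS fS.
pose fq := map fst q.
have fqw : is_walk (plus_tl tl hd) (plus_hd tl hd) s (sV s) fq by rewrite is_walk_map.
have fqu : uniq fq.
  by apply: (@map_uniq _ _ (plus_tl tl hd)); rewrite /fq -map_comp.
pose c x := count_mem x fq.
have cx x : c x = (x \in fq) by rewrite /c count_uniq_mem.
pose cc x := c x + c (sP x).
have ccS x : cc (sP x) = cc x by rewrite /cc ivP addnC.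
have cc_le x : cc x <= residual u f x.
  rewrite /cc !cx; case hx: (x \in fq); case hs: (sP x \in fq) => //=.
  - move/mapP: hx => [[x1 l] xq /= Ex]; move/mapP: hs => [[x2 l'] xq' /= Ex'].
    subst x1 x2.
    have := allP qr _ xq; rewrite /split_sigma /= => nq.
    have ll : l' != l by apply: contraNneq nq => <-.
    case: l l' xq xq' ll nq => [] [] // xq xq' _ _.
    + by rewrite -resS; apply: cap_two (allP qa _ xq').
    + by apply: cap_two (allP qa _ xq).
  - by move/mapP: hx => [z zq ->]; apply: cap_pos (allP qa _ zq).
  - by move/mapP: hs => [z zq Ez]; rewrite -resS Ez; apply: cap_pos (allP qa _ zq).
pose g e := f e - cc (inr e) + cc (inl e).
have gZ e : Posz (g e) = (Posz (f e) + Posz (cc (inl e)) - Posz (cc (inr e)))%R.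
  have := cc_le (inr e); rewrite /g /= => H; lia.
have key v : (Posz (\sum_(a | hd a == v) g a) - Posz (\sum_(a | tl a == v) g a) =
   Posz (\sum_(a | hd a == v) f a) - Posz (\sum_(a | tl a == v) f a) +
   (Posz (\sum_(x | plus_hd tl hd x == v) cc x) - Posz (\sum_(x | plus_tl tl hd x == v) cc x)))%R.
  rewrite plus_hd_sum plus_tl_sum !PoszD !sumZ.
  rewrite (eq_bigr _ (fun e _ => gZ e)) [X in (_ - X)%R](eq_bigr _ (fun e _ => gZ e)).
  rewrite !sumrB !big_split /=; ring.
have sVe a b : (sV a == b) = (a == sV b) by apply/eqP/eqP => [<-|->]; rewrite ivV.
have hS x : plus_hd tl hd (sP x) = sV (plus_tl tl hd x).
  by case: x => e /=; have [H1 H2] := sk e; rewrite ?H1 ?H2.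
have tS x : plus_tl tl hd (sP x) = sV (plus_hd tl hd x).
  by case: x => e /=; have [H1 H2] := sk e; rewrite ?H1 ?H2.
have R1 w : (\sum_(x | plus_hd tl hd x == w) c (sP x) = \sum_(x | plus_tl tl hd x == sV w) c x)%N.
  rewrite (reindex_inj (h := sP) (can_inj ivP)) /=.
  by apply: eq_big => x; rewrite ?hS ?sVe ?ivP.
have R2 w : (\sum_(x | plus_tl tl hd x == w) c (sP x) = \sum_(x | plus_hd tl hd x == sV w) c x)%N.
  rewrite (reindex_inj (h := sP) (can_inj ivP)) /=.
  by apply: eq_big => x; rewrite ?tS ?sVe ?ivP.
have W v : (Posz (\sum_(x | plus_hd tl hd x == v) cc x) - Posz (\sum_(x | plus_tl tl hd x == v) cc x) =
    Posz (v == sV s) + Posz (v == sV s) - Posz (v == s) - Posz (v == s))%R.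
  rewrite /cc !big_split /= R1 R2 !PoszD.
  have := walk_count v fqw; have := walk_count (sV v) fqw.
  rewrite (inj_eq (can_inj ivV)) sVe /c => H1 H2.
  have Ex (x1 y1 p1 q1 : int) : (x1 + q1 - (y1 + p1) = (x1 - y1) - (p1 - q1))%R by ring.
  by rewrite Ex H1 H2; ring.
exists g; split; first split.
- move=> e; have := cc_le (inl e); have := fu e; rewrite /g /= => H1 H2; lia.
- move=> v v1 v2; have := key v; rewrite W (negbTE v1) (negbTE v2) /=.
  rewrite (fc v v1 v2) subrr !addr0 ?subr0 => /eqP; rewrite subr_eq0 => /eqP -[] ->//.
- move=> e; rewrite /g fS.
  by rewrite -[inr (sE e)]/(sP (inr e)) -[inl (sE e)]/(sP (inl e)) !ccS.
- rewrite /flow_value; have := key s; rewrite W eqxx.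
  rewrite (_ : (s == sV s) = false); last by rewrite eq_sym; apply/negbTE.
  move=> H.
  have Ex (x1 y1 p1 q1 r : int) : (x1 - y1 = p1 - q1 + r)%R -> (y1 - x1 = q1 - p1 - r)%R.
    by move=> E0; rewrite -opprB E0; ring.
  rewrite (Ex _ _ _ _ _ H) /=; ring.
Qed.

Unset Implicit Arguments. Set Strict Implicit.

Theorem mainTheorem5 (V E : finType) (tl hd : E -> V) (sV : V -> V)
    (sE : E -> E) (u : E -> nat) (s : V) (f : E -> nat) :
  skew_symmetric tl hd sV sE ->
  symmetric_fun sE u ->
  is_ISflow tl hd sV sE u s f ->
  (forall g : E -> nat, is_ISflow tl hd sV sE u s g ->
      (flow_value tl hd s g <= flow_value tl hd s f)%R)
  <->
  ~ (exists p : seq ((E + E) * bool),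
       split_regular_path (plus_tl tl hd) (plus_hd tl hd) (plus_sigma sE)
         (residual u f) s (sV s) p).
Proof.
move=> sk uS fI; split.
  move=> mx /(easy_dir sk uS fI) [g [gI gv]].
  have := mx g gI; rewrite gv => H.
  have : (flow_value tl hd s f < flow_value tl hd s f + 2)%R by rewrite ltrDl.
  by rewrite Order.TotalTheory.ltNge H.
move=> nop g gI; rewrite Order.TotalTheory.leNgt; apply/negP => lt.
by apply: nop; apply: (hard_dir sk uS fI gI lt).
Qed.
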